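(* In the idealized setting described in the context, for the PAIR framework one has $\ell_k\ge 2\ell_{k-1}$ for every iteration $k\ge 1$.
   Context: Setting: a goal-conditioned Markov decision process with finite state space $\mathcal S$, finite action set $\mathcal A$, deterministic transitions, goal space $\mathcal G=\mathcal S$, and sparse reward $r(s,a,g)=\mathbb I\{s=g\}$. A policy is $\pi(a|s,g)$. Write $s\xrightarrow{\pi} g$ if, starting at $s_0=s$ and choosing $a_i\sim\pi(\cdot|s_i,g)$, $s_{i+1}\sim P(\cdot|s_i,a_i)$, the goal $g$ is reached ($s_t=g$ for some $t\ge 0$) with probability $1$. Let $d(s,s')$ be the minimum $t$ such that some policy reaches $s_t=s'$ from $s_0=s$ with probability $1$ ($+\infty$ if none). Let $\pi^{(k)}$ be the policy at the end of iteration $k$ ($\pi^{(0)}$ the initial policy) and $\ell_k=\sup\{\ell:\ s\xrightarrow{\pi^{(k)}} g \text{ for all } s,g \text{ with } d(s,g)\le \ell\}$. Assumptions: if $P(s'|s,a)=1$ then $\pi^{(0)}(a|s,g=s')=1$. In each iteration every state-goal pair $(s,g)$ is sampled at least once. Idealized PAIR iteration $k$: for each pair $(s,g)$, roll out $\pi^{(k-1)}$ from $s$ toward $g$; if it succeeds the trajectory is added to the dataset; otherwise task reduction selects a subgoal $s'$ maximizing $V(s,s')\cdot V(s',g)$, where $V$ is the goal-conditioned value function (equal to $1$ exactly on pairs $(x,y)$ with $x\xrightarrow{\pi^{(k-1)}}y$), executes $\pi^{(k-1)}(\cdot|\cdot,s')$ from $s$ and then $\pi^{(k-1)}(\cdot|\cdot,g)$,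 and adds the resulting successful trajectory from $s$ to $g$ if any. The supervised learning step then produces $\pi^{(k)}$ with $s\xrightarrow{\pi^{(k)}}g$ for every pair $(s,g)$ for which the dataset contains a successful trajectory from $s$ to $g$. *)

(* Defs.v *)
From HB Require Import structures.
From mathcomp Require Import all_boot all_order all_algebra.
From mathcomp Require Import all_classical all_reals all_analysis.
Set Implicit Arguments. Unset Strict Implicit. Unset Printing Implicit Defensive.
Import Order.TTheory GRing.Theory Num.Theory.
Import numFieldNormedType.Exports.
Local Open Scope classical_set_scope.
Local Open Scope ring_scope.

Section PAIR.
Variables (R : realType) (S A : finType).
(* deterministic transitions: P(T s a | s, a) = 1 *)
Variable T : S -> A -> S.

(* A goal-conditioned policy: pi s g a = pi(a | s, g). *)
Definition policy := S -> S -> A -> R.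

Definition is_policy (pi : policy) : Prop :=
  (forall s g a, 0 <= pi s g a) /\ (forall s g, \sum_(a : A) pi s g a = 1).

Fixpoint prob_at (pi : policy) (g : S) (t : nat) (s y : S) : R :=
  match t with
  | 0 => if s == y then 1 else 0
  | t'.+1 => \sum_(a : A) pi s g a * prob_at pi g t' (T s a) y
  end.

Fixpoint hit_prob (pi : policy) (g : S) (t : nat) (s : S) : R :=
  match t with
  | 0 => if s == g then 1 else 0
  | t'.+1 => if s == g then 1
             else \sum_(a : A) pi s g a * hit_prob pi g t' (T s a)
  end.

(* s --pi--> g : g is reached (s_t = g for some t >= 0) with probability 1.
   The probability of the (increasing union) event is the limit of the
   probabilities of reaching within t steps. *)
Definition reaches (pi : policy) (s g : S) : Prop :=
  (fun t => hit_prob pi g t s) @ \oo --> (1 : R).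

(* d(s, s') <= l, where d(s,s') is the minimum t such that some policy
   reaches s_t = s' from s_0 = s with probability 1 (+oo if none). *)
Definition dist_le (s s' : S) (l : nat) : Prop :=
  exists t : nat, (t <= l)%N /\
    exists pi : policy, is_policy pi /\ prob_at pi s' t s s' = 1.

Definition solves_upto (pi : policy) (l : nat) : Prop :=
  forall s g, dist_le s g l -> reaches pi s g.

Definition ell (pi : policy) : \bar R :=
  ereal_sup [set (l%:R)%:E | l in [set l : nat | solves_upto pi l]].

(* For each sampled pair (s,g) (every pair is sampled at least once; we record
   the outcome of one sample per pair, further samples can only add data):
   - roll_ok s g : the rollout of pi_prev from s toward g succeeded;
   - sub s g     : the subgoal chosen by task reduction;
   - leg_ok s g  : the execution pi_prev(.|.,sub) from s then pi_prev(.|.,g)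
                   produced a successful trajectory from s to g;
   - D s g       : the dataset contains a successful trajectory from s to g.
   Idealization: an execution that succeeds with probability 1 succeeds. *)
Definition PAIR_iteration (pi_prev pi_next : policy) : Prop :=
  exists (V : S -> S -> R) (roll_ok : S -> S -> bool) (sub : S -> S -> S)
         (leg_ok : S -> S -> bool) (D : S -> S -> bool),
    (* V is the goal-conditioned value function of pi_prev *)
    (forall x y, 0 <= V x y <= 1) /\
    (forall x y, V x y = 1 <-> reaches pi_prev x y) /\
    (forall s g, reaches pi_prev s g -> roll_ok s g) /\
    (forall s g, roll_ok s g -> D s g) /\
    (forall s g, ~~ roll_ok s g ->
       (forall s', V s s' * V s' g <= V s (sub s g) * V (sub s g) g) /\
       (reaches pi_prev s (sub s g) -> reaches pi_prev (sub s g) g ->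
          leg_ok s g) /\
       (leg_ok s g -> D s g)) /\
    is_policy pi_next /\
    (forall s g, D s g -> reaches pi_next s g).

End PAIR.

(* Main.v *)
Require Import Defs.
From HB Require Import structures.
From mathcomp Require Import all_boot all_order all_algebra.
From mathcomp Require Import all_classical all_reals all_analysis.
From mathcomp Require Import lra zify.
Import Order.TTheory GRing.Theory Num.Theory.
Local Open Scope ring_scope.

Section Aux.
Variables (R : realType) (S A : finType) (T : S -> A -> S).

Lemma sum_ind (F : S -> R) x : \sum_z (if x == z then 1 else 0) * F z = F x.
Proof.
rewrite (bigD1 x) //= eqxx mul1r big1 ?addr0 // => z /negbTE; rewrite eq_sym => ->.
by rewrite mul0r.
Qed.

Lemma prob_add (pi : policy R S A) g a b s y :
  prob_at T pi g (a + b) s y = \sum_z prob_at T pi g a s z * prob_at T pi g b z y.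
Proof.
elim: a s => [|a IH] s /=; first by rewrite add0n sum_ind.
rewrite (eq_bigr (fun a' => \sum_z pi s g a' * (prob_at T pi g a (T s a') z * prob_at T pi g b z y))); last first.
  by move=> a' _; rewrite IH mulr_sumr.
rewrite exchange_big /=; apply: eq_bigr => z _; rewrite mulr_suml.
by apply: eq_bigr => a' _; rewrite mulrA.
Qed.

Lemma prob_ge0 (pi : policy R S A) g t s y : is_policy pi -> 0 <= prob_at T pi g t s y.
Proof.
move=> [H0 H1]; elim: t s => [|t IH] s /=; first by case: ifP.
by apply: sumr_ge0 => a _; apply: mulr_ge0.
Qed.

Lemma prob_sum (pi : policy R S A) g t s : is_policy pi -> \sum_z prob_at T pi g t s z = 1.
Proof.
move=> [H0 H1]; elim: t s => [|t IH] s /=.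
  rewrite (bigD1 s) //= eqxx big1 ?addr0 // => z /negbTE; rewrite eq_sym => ->; done.
rewrite exchange_big /= -(H1 s g); apply: eq_bigr => a _.
by rewrite -mulr_sumr IH mulr1.
Qed.

Lemma prob_le1 (pi : policy R S A) g t s y : is_policy pi -> prob_at T pi g t s y <= 1.
Proof.
move=> Hp; rewrite -(prob_sum pi g t s Hp) (bigD1 y) //= lerDl.
by apply: sumr_ge0 => z _; apply: prob_ge0.
Qed.

Fixpoint reachb (t : nat) (x y : S) : bool :=
  match t with
  | 0 => x == y
  | t'.+1 => [exists a, reachb t' (T x a) y]
  end.

Lemma prob_reach (pi : policy R S A) g t s y : prob_at T pi g t s y != 0 -> reachb t s y.
Proof.
elim: t s => [|t IH] s /=; first by case: ifP => // _; rewrite eqxx.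
move=> Hs; apply: contraTT Hs => /existsPn Hn; rewrite negbK; apply/eqP.
apply: big1 => a _.
have /negP Ha := Hn a.
case: (eqVneq (prob_at T pi g t (T s a) y) 0) => [->|/IH //]; first by rewrite mulr0.
Qed.

Definition mdist (y x : S) : nat :=
  match pselect (exists t, reachb t x y) with
  | left e => ex_minn e
  | right _ => 0%N
  end.

Lemma mdist_spec y x t : reachb t x y -> reachb (mdist y x) x y /\ (mdist y x <= t)%N.
Proof.
move=> H; rewrite /mdist; case: pselect => [e|[]]; last by exists t.
by case: ex_minnP => m Hm Hmin; split => //; apply: Hmin.
Qed.

Arguments mdist_spec {y x t}.

Definition mpol (ad : A) : policy R S A := fun x y a =>
  if [pick a' | reachb (mdist y x).-1 (T x a') y] is Some a0 then (a == a0)%:R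
  else (a == ad)%:R.

Lemma sum_eq1 (a0 : A) : \sum_(a : A) ((a == a0)%:R : R) = 1.
Proof.
rewrite (bigD1 a0) //= eqxx big1 ?addr0 // => a /negbTE ->; done.
Qed.

Lemma mpol_policy ad : is_policy (mpol ad).
Proof.
split.
  by move=> s g a; rewrite /mpol; case: pickP => *; apply: ler0n.
by move=> s g; rewrite /mpol; case: pickP => *; apply: sum_eq1.
Qed.

Lemma mpol_reach ad y : forall j x, mdist y x = j -> reachb j x y ->
  prob_at T (mpol ad) y j x y = 1.
Proof.
elim => [|j IH] x Hm /=; first by move/eqP ->; rewrite eqxx.
move=> /existsP [a Ha].
rewrite /mpol Hm /=; case: pickP => [a0 Ha0|/(_ a)]; last by rewrite Ha.
rewrite (bigD1 a0) //= eqxx mul1r big1 ?addr0; last first.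
  by move=> b /negbTE ->; rewrite mul0r.
apply: IH => //.
have [Hr Hle] := mdist_spec Ha0.
apply/eqP; rewrite eqn_leq Hle /=; rewrite leqNgt; apply/negP => Hlt.
have : reachb (mdist y (T x a0)).+1 x y by apply/existsP; exists a0.
move/mdist_spec => [_]; rewrite Hm ltnS => H; by move: (leq_trans Hlt H); rewrite ltnn.
Qed.

Lemma reach_dist (ad : A) t s z : reachb t s z -> dist_le R T s z t.
Proof.
move=> H; have [Hr Hle] := mdist_spec H.
exists (mdist z s); split => //; exists (mpol ad); split; first exact: mpol_policy.
exact: mpol_reach.
Qed.

Lemma dist_mono s z a b : (a <= b)%N -> dist_le R T s z a -> dist_le R T s z b.
Proof. by move=> Hab [t [Ht H]]; exists t; split => //; apply: leq_trans Hab. Qed.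

Lemma midpoint (ad : A) l s g : dist_le R T s g (l + l) ->
  exists z, dist_le R T s z l /\ dist_le R T z g l.
Proof.
move=> [t [Ht [pi [Hp Hprob]]]].
pose t1 := minn t l. pose t2 := (t - t1)%N.
have Et : t = (t1 + t2)%N by rewrite /t2 subnKC // geq_minl.
have Ht2 : (t2 <= l)%N by rewrite /t2 /t1; lia.
move: Hprob; rewrite Et prob_add => Hs.
have H0 : \sum_z prob_at T pi g t1 s z * (1 - prob_at T pi g t2 z g) = 0.
  under eq_bigr do rewrite mulrBr mulr1.
  by rewrite sumrB Hs prob_sum // subrr.
have Hge : forall z, 0 <= prob_at T pi g t1 s z * (1 - prob_at T pi g t2 z g).
  by move=> z; apply: mulr_ge0; [apply: prob_ge0|rewrite subr_ge0; apply: prob_le1].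
have /psumr_eq0P Hz := H0.
have [z Hz0] : exists z, prob_at T pi g t1 s z != 0.
  apply/not_existsP => Hn.
  have := prob_sum pi g t1 s Hp; rewrite big1 => [/eqP|z _]; first by rewrite eq_sym oner_eq0.
  by apply/eqP/negPn/negP/Hn.
exists z; split.
  apply: (@dist_mono _ _ t1); first by rewrite /t1 geq_minr.
  by apply: (@reach_dist ad); exact: prob_reach Hz0.
have := Hz (fun i _ => Hge i) z isT; move=> /eqP; rewrite mulf_eq0 (negbTE Hz0) /= subr_eq0 => /eqP E.
by exists t2; split => //; exists pi; split.
Qed.

Lemma step (prev next : policy R S A) l :
  PAIR_iteration T prev next -> solves_upto T prev l -> solves_upto T next (l + l).
Proof.
move=> [V [roll [sub [leg [D [HV [HVr [Hroll [HrD [Hred [Hnp HD]]]]]]]]]]] Hsol s g Hd.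
have [ad|] := pickP (@predT A); last first.
  move=> Hn; have [_ H1] := Hnp; have := H1 s g; rewrite big_pred0 // => /eqP.
  by rewrite eq_sym oner_eq0.
have [z [H1 H2]] := midpoint ad _ _ _ Hd.
move=> _; apply: (HD s g).
case/boolP: (roll s g) => [/HrD //|Hn].
have [Hmax [Hleg HlD]] := Hred s g Hn.
apply: HlD; apply: Hleg; apply/HVr.
- have := Hmax z; rewrite (proj2 (HVr _ _) (Hsol _ _ H1)) (proj2 (HVr _ _) (Hsol _ _ H2)) mulr1 => Hle.
  have := HV s (sub s g); have := HV (sub s g) g => /andP [a1 a2] /andP [b1 b2].
  nra.
- have := Hmax z; rewrite (proj2 (HVr _ _) (Hsol _ _ H1)) (proj2 (HVr _ _) (Hsol _ _ H2)) mulr1 => Hle.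
  have := HV s (sub s g); have := HV (sub s g) g => /andP [a1 a2] /andP [b1 b2].
  nra.
Qed.

End Aux.

Theorem lemmaA1 (R : realType) (S A : finType) (T : S -> A -> S)
  (pis : nat -> policy R S A)
  (Hpol : forall k, is_policy (pis k))
  (Hinit : forall s a, pis 0%N s (T s a) a = 1)
  (Hiter : forall k, (0 < k)%N -> PAIR_iteration T (pis k.-1) (pis k)) :
  forall k, (0 < k)%N -> (2%:E * ell T (pis k.-1) <= ell T (pis k))%E.
Proof.
move=> k Hk; rewrite /ell -ereal_sup_pZl //.
apply: ereal_sup_le => _ [_ [l Hl <-] <-].
exists (l + l)%N; first by apply: (@step R S A T (pis k.-1) (pis k) l (Hiter k Hk) Hl).

by rewrite -EFinM natrD; congr (_%:E); lra.
Qed.
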